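(* Let $n\ge 2$ and let $\chi$ be a simple game on $N=\{1,\dots,n\}$. For any two voters $i,j\in N$, either $\mathcal{BZ}(\chi,i)=\mathcal{BZ}(\chi,j)$ or $$\left|\mathcal{BZ}(\chi,i)-\mathcal{BZ}(\chi,j)\right|\ge\frac{2}{\left(\lfloor n/2\rfloor+1\right)\binom{n}{\lfloor n/2\rfloor+1}}.$$
   Context: A simple game on $N=\{1,\dots,n\}$ is a monotone Boolean function $\chi:2^N\to\{0,1\}$ (i.e. $\chi(U)\le\chi(U')$ for $U\subseteq U'$) with $\chi(\emptyset)=0$ and $\chi(N)=1$. An $i$-swing is a set $U\subseteq N\setminus\{i\}$ with $\chi(U)=0$ and $\chi(U\cup\{i\})=1$. The Banzhaf index is $\mathcal{BZ}(\chi,i)=\eta_i/m$, where $\eta_i$ is the number of $i$-swings and $m=\sum_{k=1}^n\eta_k$ is the total number of swings. *)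

(* Defs.v *)
(* Voters N = {1..n} are modelled by 'I_n (0-indexed). *)
From mathcomp Require Import all_boot all_order all_algebra.
Set Implicit Arguments. Unset Strict Implicit. Unset Printing Implicit Defensive.
Import Order.TTheory GRing.Theory Num.Theory.

Definition simple_game (n : nat) (chi : {set 'I_n} -> bool) : Prop :=
  [/\ forall U V : {set 'I_n}, U \subset V -> chi U <= chi V,
      chi set0 = false & chi setT = true].

Definition swings (n : nat) (chi : {set 'I_n} -> bool) (i : 'I_n) : {set {set 'I_n}} :=
  [set U : {set 'I_n} | [&& i \notin U, ~~ chi U & chi (i |: U)]].

Definition eta (n : nat) (chi : {set 'I_n} -> bool) (i : 'I_n) : nat :=
  #|swings chi i|.

Definition total_swings (n : nat) (chi : {set 'I_n} -> bool) : nat :=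
  \sum_(k < n) eta chi k.

Definition banzhaf (n : nat) (chi : {set 'I_n} -> bool) (i : 'I_n) : rat :=
  ((eta chi i)%:R / (total_swings chi)%:R)%R.

(* Main.v *)
Require Import Defs.
From mathcomp Require Import all_boot all_order all_algebra zify.
Import Order.TTheory GRing.Theory Num.Theory.
Section S.
Variables (n : nat) (chi : {set 'I_n} -> bool).
Hypothesis mono : forall U V : {set 'I_n}, U \subset V -> chi U <= chi V.

Definition Ai (i : 'I_n) := #|[set W : {set 'I_n} | chi W & i \in W]|.
Definition Bi (i : 'I_n) := #|[set W : {set 'I_n} | chi W & i \notin W]|.

Lemma eta_AB i : eta chi i + Bi i = Ai i.
Proof.
pose P := [set U : {set 'I_n} | (i \notin U) && chi (i |: U)].
have -> : Bi i = #|P :&: [set W : {set 'I_n} | chi W & i \notin W]|.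
  apply: eq_card => U; rewrite !inE.
  case: (boolP (i \in U)) => iU; rewrite ?andbF ?andbT //=.
  case cU: (chi U); rewrite ?andbT ?andbF //=.
  by have := @mono _ _ (subsetUr [set i] U); rewrite cU; case: (chi _).
have -> : eta chi i = #|P :\: [set W : {set 'I_n} | chi W & i \notin W]|.
  rewrite /eta /swings; apply: eq_card => U; rewrite !inE.
  by case: (i \in U); case: (chi U); case: (chi (i |: U)).
rewrite addnC cardsID /Ai.
rewrite -(card_in_imset (f := fun U => i |: U)).
  apply: eq_card => W; rewrite inE; apply/imsetP/idP.
    by case=> U; rewrite inE => /andP[_ cU] ->; rewrite cU setU11.
  case/andP=> cW iW; exists (W :\ i); last by rewrite setD1K.
  by rewrite inE setD11 setD1K.
move=> U V; rewrite !inE => /andP[iU _] /andP[iV _] E.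
by rewrite -(setU1K iU) -(setU1K iV) E.
Qed.

Lemma AB_w i : Ai i + Bi i = #|[set W : {set 'I_n} | chi W]|.
Proof.
rewrite /Ai /Bi -[RHS](cardsID [set W : {set 'I_n} | i \in W]).
congr (_ + _); apply: eq_card => W; by rewrite !inE // andbC.
Qed.

Lemma Ai_sum i : Ai i = \sum_(W | chi W) (i \in W : nat).
Proof.
rewrite /Ai -sum1_card big_mkcond [RHS]big_mkcond /=.
by apply: eq_bigr => W _; rewrite inE; case: (chi W); case: (i \in W).
Qed.

Lemma Bi_sum i : Bi i = \sum_(W | chi W) (i \notin W : nat).
Proof.
rewrite /Bi -sum1_card big_mkcond [RHS]big_mkcond /=.
by apply: eq_bigr => W _; rewrite inE; case: (chi W); case: (i \in W).
Qed.

Lemma card_sumI (W : {set 'I_n}) : #|W| = \sum_i (i \in W : nat).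
Proof.
by rewrite -sum1_card big_mkcond; apply: eq_bigr => i _; case: (i \in W).
Qed.

Lemma sumA : \sum_i Ai i = \sum_(W | chi W) #|W|.
Proof.
under eq_bigr do rewrite Ai_sum.
rewrite exchange_big /=; apply: eq_bigr => W _; by rewrite card_sumI.
Qed.

Lemma sumB : \sum_i Bi i = \sum_(W | chi W) #|~: W|.
Proof.
under eq_bigr do rewrite Bi_sum.
rewrite exchange_big /=; apply: eq_bigr => W _; rewrite card_sumI.
by apply: eq_bigr => i _; rewrite inE.
Qed.

Lemma m_le : total_swings chi <= \sum_(W | chi W) (2 * #|W| - n).
Proof.
have E : total_swings chi + \sum_i Bi i = \sum_i Ai i.
  by rewrite /total_swings -big_split /=; apply: eq_bigr => i _; apply: eta_AB.
rewrite sumA sumB in E.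
have L : \sum_(W | chi W) #|W| <= \sum_(W | chi W) ((2 * #|W| - n) + #|~: W|).
  apply: leq_sum => W _; have := cardsC W; rewrite card_ord; lia.
rewrite big_split /= in L.
by rewrite -E leq_add2r in L.
Qed.

End S.

Lemma sum_by_card n (F : nat -> nat) :
  \sum_(W : {set 'I_n}) F #|W| = \sum_(w < n.+1) 'C(n, w) * F w.
Proof.
rewrite (partition_big (fun W : {set 'I_n} => (inord #|W| : 'I_n.+1)) predT) //=.
apply: eq_bigr => w _.
have E : forall W : {set 'I_n}, (inord #|W| == w :> 'I_n.+1) = (#|W| == w).
  move=> W; have := max_card W; rewrite card_ord => h.
  by rewrite -(inj_eq val_inj) /= inordK.
under eq_bigl do rewrite E.
rewrite (eq_bigr (fun _ => F w)); last by move=> W /eqP ->.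
rewrite sum_nat_const; have := card_draws ('I_n) w; rewrite card_ord => <-.
congr (_ * _); apply: eq_card => W; by rewrite inE.
Qed.

Section Bin.
Variable n : nat.
Hypothesis n1 : 0 < n.
Let k := n./2.
Let a w := n * 'C(n.-1, w).

Lemma hk : n./2 * 2 + odd n = n /\ odd n <= 1.
Proof. by rewrite muln2 addnC odd_double_half leq_b1. Qed.

Lemma term_eq w : k < w <= n -> 'C(n, w) * (2 * w - n) = a w.-1 - a w /\ a w <= a w.-1.
Proof.
case: w => [|v] /andP[hw hwn] //=.
have [h1 h2] := hk.
have -> : 2 * v.+1 - n = v.+1 - (n - v.+1) by rewrite /k in hw; lia.
rewrite /a mul_bin_diag mul_bin_down mulnBr [_ * v.+1]mulnC [_ * (n - _)]mulnC.
split=> //; apply: leq_mul => //; rewrite /k in hw; lia.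
Qed.

Lemma tele t : k + t <= n ->
  \sum_(k.+1 <= w < k.+1 + t) 'C(n, w) * (2 * w - n) = a k - a (k + t) /\ a (k + t) <= a k.
Proof.
elim: t => [|t IH] h; first by rewrite !addn0 big_geq // subnn.
have h' : k + t <= n by move: h; rewrite addnS; lia.
have [IH1 IH2] := IH h'.
rewrite addnS big_nat_recr /=; last by rewrite leq_addr.
have hw : k < (k + t).+1 <= n by rewrite ltnS leq_addr /= -addnS.
have [T1 T2] := term_eq _ hw.
rewrite IH1 addSn T1 /= -addnS.
move: T2 => /= T2. rewrite addnS in T2 *. lia.
Qed.

Lemma bin_identity :
  \sum_(w < n.+1) 'C(n, w) * (2 * w - n) = (n./2).+1 * 'C(n, (n./2).+1).
Proof.
have [h1 h2] := hk.
rewrite -(big_mkord xpredT (fun w => 'C(n, w) * (2 * w - n))).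
rewrite (big_cat_nat (n := k.+1)) //=; last by rewrite /k; lia.
rewrite big_nat_cond big1 ?add0n; last first.
  move=> w /andP[/andP[_ hw] _]; have -> : 2 * w - n = 0 by rewrite /k in hw; lia.
  by rewrite muln0.
have hkn : k + (n - k) = n by rewrite /k; lia.
have hkn' : k + (n - k) <= n by rewrite hkn.
have [T _] := tele _ hkn'.
rewrite addSn hkn in T; rewrite T /a (@bin_small n.-1 n) ?muln0 ?subn0; last by rewrite ltn_predL.
by rewrite mul_bin_diag.
Qed.
End Bin.

Local Open Scope ring_scope.
Lemma rat_bound (a b m B : nat) : (a + 2 <= b)%N -> (0 < m)%N -> (m <= B)%N ->
  2%:R / B%:R <= `|a%:R / m%:R - b%:R / m%:R : rat|.
Proof.
move=> hab hm hmB.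
have m0 : (0 : rat) < m%:R by rewrite ltr0n.
have B0 : (0 : rat) < B%:R by rewrite ltr0n; apply: leq_trans hmB.
have -> : a%:R / m%:R - b%:R / m%:R = - ((b%:R - a%:R) / m%:R : rat) by rewrite mulrBl opprB.
have hba : (2 : rat) <= b%:R - a%:R.
  rewrite lerBrDr -natrD ler_nat; by rewrite addnC.
have hba0 : (0:rat) <= b%:R - a%:R by apply: le_trans hba.
rewrite normrN ger0_norm; last by rewrite divr_ge0 // ltW.
rewrite ler_pdivrMr //.
apply: (le_trans hba).
rewrite -{1}(divfK (lt0r_neq0 m0) (b%:R - a%:R)).
apply: ler_wpM2l; first by rewrite divr_ge0 // ltW.
by rewrite ler_nat.
Qed.

Theorem mainTheorem6 (n : nat) (chi : {set 'I_n} -> bool)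
  (hn : (2 <= n)%N) (hchi : simple_game chi) (i j : 'I_n) :
  banzhaf chi i = banzhaf chi j \/
  2%:R / (((n./2).+1 * 'C(n, (n./2).+1))%N)%:R <= `|banzhaf chi i - banzhaf chi j|.
Proof.
have [mono _ _] := hchi.
have Pi := eta_AB _ _ mono i; have Pj := eta_AB _ _ mono j.
have Wi := AB_w _ chi i; have Wj := AB_w _ chi j.
have mB : (total_swings chi <= (n./2).+1 * 'C(n, (n./2).+1))%N.
  apply: (leq_trans (m_le _ _ mono)).
  rewrite -bin_identity; last by lia.
  rewrite -(sum_by_card n (fun w => 2 * w - n)%N) big_mkcond /=; apply: leq_sum => W _; by case: (chi W).
have ge : forall k, (eta chi k <= total_swings chi)%N.
  by move=> k; rewrite /total_swings (bigD1 k) //= leq_addr.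
case: (ltngtP (eta chi i) (eta chi j)) => h.
- right; rewrite /banzhaf; apply: rat_bound => //; first lia.
  by apply: leq_trans (ge j); lia.
- right; rewrite /banzhaf distrC; apply: rat_bound => //; first lia.
  by apply: leq_trans (ge i); lia.
- by left; rewrite /banzhaf h.
Qed.
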